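(* Let $n\geq 2$, $\Lambda=U^{\oplus 3}\oplus E_8(-1)^{\oplus 2}\oplus\mathbb{Z}\ell$ with $(\ell,\ell)=-2(n-1)$, let $\gamma$ be a positive divisor of $2(n-1)$, $a$ an integer coprime to $\gamma$, and $t$ an integer with $d:=\gamma^2t-(n-1)a^2>0$; set $h=\gamma(e+tf)-a\ell$. Then restriction $O(\Lambda,h)\to O(\Lambda_h)$ induces an isomorphism $\widetilde{O}(\Lambda,h)\cong\widetilde{O}(\Lambda_h)$.
   Context: $e,f$ is the standard basis of the first copy of $U$. $\Lambda_h=h^\perp\subset\Lambda$. For an even lattice $L$, $D(L)=L^\vee/L$ is its discriminant group and $\widetilde{O}(L)$ is the group of isometries of $L$ inducing the identity on $D(L)$. $O(\Lambda,h)$ is the stabilizer of $h$ in $O(\Lambda)$ and $\widetilde{O}(\Lambda,h)=\widetilde{O}(\Lambda)\cap O(\Lambda,h)$. Here $h$ is primitive of square $2d$ and divisibility $\gamma$. *)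

(* Defs.v *)
From HB Require Import structures.
From mathcomp Require Import all_boot all_order all_algebra.
Set Implicit Arguments. Unset Strict Implicit. Unset Printing Implicit Defensive.
Import Order.TTheory GRing.Theory Num.Theory.
Local Open Scope ring_scope.

(* Lattice Lambda = U^3 + E8(-1)^2 + Z l, realised as Z^23 (column vectors)
   with basis: 0..5 = three copies of U (e=b0, f=b1 for the first copy),
   6..13 and 14..21 = two copies of E8(-1), 22 = l with (l,l) = -2(n-1). *)

(* Dynkin diagram of E8 (Bourbaki labels shifted to 0..7):
   0-2, 2-3, 3-4, 4-5, 5-6, 6-7, 1-3. *)
Definition E8adj (i j : nat) : bool :=
  [|| (i == 0%N) && (j == 2%N), (i == 2%N) && (j == 3%N),
      (i == 3%N) && (j == 4%N), (i == 4%N) && (j == 5%N),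
      (i == 5%N) && (j == 6%N), (i == 6%N) && (j == 7%N)
    | (i == 1%N) && (j == 3%N)].

(* Gram matrix of E8(-1) = minus the Cartan matrix of E8. *)
Definition E8m (i j : nat) : int :=
  if i == j then -2 else if E8adj i j || E8adj j i then 1 else 0.

Definition gram_entry (n i j : nat) : int :=
  if (i < 6)%N && (j < 6)%N then
    (if (i./2 == j./2) && (i != j) then 1 else 0)
  else if [&& (6 <= i)%N, (i < 14)%N, (6 <= j)%N & (j < 14)%N] then
    E8m (i - 6) (j - 6)
  else if [&& (14 <= i)%N, (i < 22)%N, (14 <= j)%N & (j < 22)%N] then
    E8m (i - 14) (j - 14)
  else if (i == 22%N) && (j == 22%N) then - (2 * n.-1)%:Z
  else 0.

Definition Gram (n : nat) : 'M[int]_23 := \matrix_(i, j) gram_entry n i j.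

Definition toQ {m k : nat} (M : 'M[int]_(m, k)) : 'M[rat]_(m, k) :=
  map_mx (fun z : int => z%:~R) M.

Definition form (n : nat) (x y : 'cV[int]_23) : int := (x^T *m Gram n *m y) 0 0.
Definition formQ (n : nat) (x y : 'cV[rat]_23) : rat := (x^T *m toQ (Gram n) *m y) 0 0.

Definition isint (q : rat) : Prop := exists k : int, q = k%:~R.

Definition bv (k : nat) : 'cV[int]_23 := \col_(i < 23) (if (i : nat) == k then 1 else 0).
Definition e_ : 'cV[int]_23 := bv 0.
Definition f_ : 'cV[int]_23 := bv 1.
Definition l_ : 'cV[int]_23 := bv 22.

Definition hvec (gamma : nat) (a t : int) : 'cV[int]_23 :=
  gamma%:Z *: (e_ + t *: f_) - a *: l_.

Definition in_dual (n : nat) (x : 'cV[rat]_23) : Prop :=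
  forall y : 'cV[int]_23, isint (formQ n x (toQ y)).

Definition isom_Lambda (n : nat) (g : 'M[int]_23) : Prop :=
  g \in unitmx /\ g^T *m Gram n *m g = Gram n.

Definition tildeO_Lambda (n : nat) (g : 'M[int]_23) : Prop :=
  isom_Lambda n g /\
  forall x : 'cV[rat]_23, in_dual n x ->
    exists z : 'cV[int]_23, toQ g *m x - x = toQ z.

Definition tildeO_Lambda_h (n : nat) (h : 'cV[int]_23) (g : 'M[int]_23) : Prop :=
  tildeO_Lambda n g /\ g *m h = h.

Definition in_span (P : 'cV[int]_23 -> Prop) (x : 'cV[rat]_23) : Prop :=
  exists m : nat, exists y : 'cV[int]_23, (0 < m)%N /\ P y /\ x *+ m = toQ y.

Definition in_sub_dual (n : nat) (P : 'cV[int]_23 -> Prop) (x : 'cV[rat]_23) : Prop :=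
  in_span P x /\ forall y, P y -> isint (formQ n x (toQ y)).

Definition isom_sub (n : nat) (P : 'cV[int]_23 -> Prop)
    (phi : 'cV[int]_23 -> 'cV[int]_23) : Prop :=
  (forall x, P x -> P (phi x)) /\
  (exists psi : 'cV[int]_23 -> 'cV[int]_23,
      (forall x, P x -> P (psi x)) /\
      (forall x, P x -> psi (phi x) = x) /\
      (forall x, P x -> phi (psi x) = x)) /\
  (forall x y, P x -> P y -> phi (x + y) = phi x + phi y) /\
  (forall x y, P x -> P y -> form n (phi x) (phi y) = form n x y).

(* tilde O(P): the Q-linear extension of phi acts trivially on P^vee / P.
   For x in P^vee with m x = y in P, phi_Q(x) = m^-1 phi(y). *)
Definition tildeO_sub (n : nat) (P : 'cV[int]_23 -> Prop)
    (phi : 'cV[int]_23 -> 'cV[int]_23) : Prop :=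
  isom_sub n P phi /\
  forall (x : 'cV[rat]_23) (m : nat) (y : 'cV[int]_23),
    in_sub_dual n P x -> (0 < m)%N -> P y -> x *+ m = toQ y ->
    exists z : 'cV[int]_23, P z /\ (m%:R)^-1 *: toQ (phi y) - x = toQ z.

Definition Lambda_perp (n : nat) (h : 'cV[int]_23) (v : 'cV[int]_23) : Prop :=
  form n v h = 0.

(* Main.v *)
Require Import Defs.
From HB Require Import structures.
From mathcomp Require Import all_boot all_order all_algebra.
From mathcomp Require Import ring.
Set Implicit Arguments. Unset Strict Implicit. Unset Printing Implicit Defensive.
Import Order.TTheory GRing.Theory Num.Theory.
Local Open Scope ring_scope.

Lemma toQE m k (M : 'M[int]_(m, k)) : toQ M = map_mx (intr : int -> rat) M.
Proof. by []. Qed.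

Lemma toQ_mul m k p (A : 'M[int]_(m, k)) (B : 'M[int]_(k, p)) :
  toQ (A *m B) = toQ A *m toQ B.
Proof. by rewrite !toQE map_mxM. Qed.

Lemma toQ_add m k (A B : 'M[int]_(m, k)) : toQ (A + B) = toQ A + toQ B.
Proof. by rewrite !toQE map_mxD. Qed.

Lemma toQ_opp m k (A : 'M[int]_(m, k)) : toQ (- A) = - toQ A.
Proof. by rewrite !toQE map_mxN. Qed.

Lemma toQ_sub m k (A B : 'M[int]_(m, k)) : toQ (A - B) = toQ A - toQ B.
Proof. by rewrite toQ_add toQ_opp. Qed.

Lemma toQ_scale m k (c : int) (A : 'M[int]_(m, k)) : toQ (c *: A) = c%:~R *: toQ A.
Proof. by apply/matrixP => i j; rewrite !mxE intrM. Qed.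

Lemma toQ_tr m k (A : 'M[int]_(m, k)) : toQ A^T = (toQ A)^T.
Proof. by rewrite !toQE map_trmx. Qed.

Lemma toQ_inj m k : injective (@toQ m k).
Proof.
move=> A B H; apply/matrixP => i j.
by have := congr1 (fun M : 'M[rat]_(m, k) => M i j) H; rewrite !mxE => /intr_inj.
Qed.

Lemma toQ0 m k : toQ (0 : 'M[int]_(m, k)) = 0.
Proof. by apply/matrixP => i j; rewrite !mxE. Qed.

Lemma toQ1 m : toQ (1%:M : 'M[int]_m) = 1%:M.
Proof. by apply/matrixP => i j; rewrite !mxE; case: (i == j). Qed.
Definition bil (R : comPzRingType) (M : 'M[R]_23) (x y : 'cV[R]_23) : R :=
  (x^T *m M *m y) 0 0.

Section Bil.
Variables (R : comPzRingType) (M : 'M[R]_23).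
Local Notation b := (bil M).

Lemma bilDl x1 x2 y : b (x1 + x2) y = b x1 y + b x2 y.
Proof. by rewrite /bil linearD /= !mulmxDl mxE. Qed.
Lemma bilDr x y1 y2 : b x (y1 + y2) = b x y1 + b x y2.
Proof. by rewrite /bil !mulmxDr mxE. Qed.
Lemma bilZl c x y : b (c *: x) y = c * b x y.
Proof. by rewrite /bil linearZ /= -!scalemxAl mxE. Qed.
Lemma bilZr c x y : b x (c *: y) = c * b x y.
Proof. by rewrite /bil -!scalemxAr mxE. Qed.
Lemma bilNl x y : b (- x) y = - b x y.
Proof. by rewrite -scaleN1r bilZl mulN1r. Qed.
Lemma bilNr x y : b x (- y) = - b x y.
Proof. by rewrite -scaleN1r bilZr mulN1r. Qed.
Lemma bilBl x1 x2 y : b (x1 - x2) y = b x1 y - b x2 y.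
Proof. by rewrite bilDl bilNl. Qed.
Lemma bilBr x y1 y2 : b x (y1 - y2) = b x y1 - b x y2.
Proof. by rewrite bilDr bilNr. Qed.
Lemma bil0l y : b 0 y = 0.
Proof. by rewrite -(scale0r (0 : 'cV[R]_23)) bilZl mul0r. Qed.
Lemma bil0r y : b y 0 = 0.
Proof. by rewrite -(scale0r (0 : 'cV[R]_23)) bilZr mul0r. Qed.

Lemma bil_sym_gen : M^T = M -> forall x y, b x y = b y x.
Proof.
move=> HM x y; rewrite /bil.
have E : forall A : 'M[R]_1, A 0 0 = A^T 0 0 by move=> A; rewrite mxE.
rewrite E.
by rewrite !trmx_mul trmxK HM mulmxA.
Qed.

Lemma bil_iso (g : 'M[R]_23) : g^T *m M *m g = M -> forall x y, b (g *m x) (g *m y) = b x y.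
Proof.
by move=> Hg x y; rewrite /bil trmx_mul -[in RHS]Hg !mulmxA.
Qed.

Lemma bil_delta (i j : 'I_23) : b (delta_mx i 0) (delta_mx j 0) = M i j.
Proof.
by rewrite /bil trmx_delta -colE -rowE !mxE.
Qed.

End Bil.

Lemma mx_eq_bil (R : comPzRingType) (A C : 'M[R]_23) : (forall x y, bil A x y = bil C x y) -> A = C.
Proof.
move=> H; apply/matrixP => i j; by rewrite -(bil_delta A) -(bil_delta C) H.
Qed.


Lemma form_bil (n : nat) : Defs.form n = bil (Gram n). Proof. by []. Qed.
Lemma formQ_bil (n : nat) : formQ n = bil (toQ (Gram n)). Proof. by []. Qed.

Lemma gram_entry_sym n i j : gram_entry n i j = gram_entry n j i.
Proof.
have A4 : forall a b c d : bool, [&& a, b, c & d] = [&& c, d, a & b] by do 4 case.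
rewrite /gram_entry /E8m (andbC (j < 6)%N) (eq_sym (j./2)) (eq_sym j i) (A4 (6<=j)%N)
  (A4 (14 <= j)%N) (andbC (j == 22%N)) (eq_sym (j - 6)%N) (eq_sym (j-14)%N)
  (orbC (E8adj (j-6) _)) (orbC (E8adj (j-14) _)).
by [].
Qed.

Lemma Gram_sym n : (Gram n)^T = Gram n.
Proof. by apply/matrixP => i j; rewrite !mxE gram_entry_sym. Qed.

Lemma form_sym n x y : Defs.form n x y = Defs.form n y x.
Proof. by rewrite form_bil; apply: bil_sym_gen; apply: Gram_sym. Qed.

Lemma formQ_sym n x y : formQ n x y = formQ n y x.
Proof. by rewrite formQ_bil; apply: bil_sym_gen; rewrite -toQ_tr Gram_sym. Qed.

Lemma formQ_toQ n x y : formQ n (toQ x) (toQ y) = (Defs.form n x y)%:~R.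
Proof. by rewrite /formQ /Defs.form -toQ_tr -!toQ_mul mxE. Qed.

Lemma ge_col0 n (i : nat) : gram_entry n i 0 = if i == 1%N then 1 else 0.
Proof.
case: i => [|[|i]] //; rewrite /gram_entry /= !andbF /=; by case: ifP.
Qed.

Lemma ge_col1 n (i : nat) : gram_entry n i 1 = if i == 0%N then 1 else 0.
Proof.
case: i => [|[|i]] //; rewrite /gram_entry /= !andbF /=; by case: ifP.
Qed.

Lemma ge_col22 n (i : nat) : gram_entry n i 22 = if i == 22%N then - (2 * n.-1)%:Z else 0.
Proof.
rewrite /gram_entry /= !andbF /= andbT; by case: ifP.
Qed.

Lemma bvE k : (k < 23)%N -> bv k = delta_mx (inord k) 0.
Proof.
move=> hk; apply/matrixP => i j; rewrite !mxE (ord1 j) eqxx andbT.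
rewrite -val_eqE /= inordK //; by case: (_ == _).
Qed.

Lemma bv_entry k (i : 'I_23) : bv k i 0 = if (i : nat) == k then 1 else 0.
Proof. by rewrite mxE. Qed.

Lemma Gram_bv n k : (k < 23)%N -> Gram n *m bv k = \col_i gram_entry n i k.
Proof.
move=> hk; rewrite bvE // -colE; apply/matrixP => i j; by rewrite !mxE inordK.
Qed.

Lemma Gram_e n : Gram n *m e_ = f_.
Proof. by rewrite Gram_bv //; apply/matrixP => i j; rewrite !mxE ge_col0. Qed.
Lemma Gram_f n : Gram n *m f_ = e_.
Proof. by rewrite Gram_bv //; apply/matrixP => i j; rewrite !mxE ge_col1. Qed.
Lemma Gram_l n : Gram n *m l_ = (- (2 * n.-1)%:Z) *: l_.
Proof.
rewrite Gram_bv //; apply/matrixP => i j; rewrite !mxE ge_col22.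
by case: ifP; rewrite ?mulr1 ?mulr0.
Qed.

Definition cd (w : 'cV[int]_23) (k : nat) : int := w (inord k) 0.

Lemma form_bv (w : 'cV[int]_23) k : (k < 23)%N -> (w^T *m bv k) 0 0 = cd w k.
Proof. by move=> hk; rewrite bvE // -colE !mxE. Qed.

Lemma sum_bv (w : 'cV[int]_23) k : (k < 23)%N -> \sum_j w^T 0 j * bv k j 0 = cd w k.
Proof. by move=> hk; rewrite -form_bv // mxE. Qed.

Lemma scalemxAr' (R : comPzRingType) m k p (c : R) (A : 'M[R]_(m,k)) (B : 'M[R]_(k,p)) : A *m (c *: B) = c *: (A *m B).
Proof. by rewrite scalemxAr. Qed.

Lemma form_h n gamma a t w :
  Defs.form n w (hvec gamma a t) =
  gamma%:Z * (cd w 1 + t * cd w 0) - a * (- (2 * n.-1)%:Z) * cd w 22.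
Proof.
rewrite /Defs.form -mulmxA /hvec.
rewrite !(mulmxBr, mulmxDr, scalemxAr') Gram_e Gram_f Gram_l scalemxAr' /e_ /f_ /l_.
rewrite !mxE !sum_bv //; ring.
Qed.


Lemma scale_inj m k (c : int) (x y : 'M[int]_(m, k)) : c != 0 -> c *: x = c *: y -> x = y.
Proof.
move=> hc /matrixP H; apply/matrixP => i j; have := H i j; rewrite !mxE.
by move/(mulfI hc).
Qed.

Lemma cvE (v : 'cV[int]_23) : v = \sum_(j < 23) v j 0 *: delta_mx j 0.
Proof.
rewrite {1}(matrix_sum_delta v); apply: eq_bigr => j _.
by rewrite big_ord1.
Qed.

Lemma denom_exists (x : 'cV[rat]_23) : exists m X, (0 < m)%N /\ x *+ m = toQ X.
Proof.
pose D : int := \prod_(i < 23) denq (x i 0).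
have Dpos : 0 < D by apply: prodr_gt0 => i _; apply: denq_gt0.
exists `|D|%N, (\matrix_(i, j) numq (x i j * D%:~R)).
split; first by rewrite absz_gt0 gt_eqF.
apply/matrixP => i j; rewrite mulmxnE !mxE (ord1 j).
have -> : x i 0 *+ `|D| = x i 0 * D%:~R by rewrite -mulr_natr natr_absz gtr0_norm.
have [k Hk] : exists k : int, x i 0 * D%:~R = k%:~R.
  exists (numq (x i 0) * \prod_(j | j != i) denq (x j 0)).
  by rewrite /D (bigD1 i) //= !intrM mulrA -numqE.
by rewrite Hk numq_int.
Qed.

Section Main.
Variables (n : nat) (h : 'cV[int]_23).
Local Notation fm := (Defs.form n).
Local Notation fQ := (formQ n).
Local Notation P := (Lambda_perp n h).
Local Notation N := (Defs.form n h h).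
Hypothesis Npos : 0 < N.

Lemma N_neq0 : N != 0. Proof. by rewrite gt_eqF. Qed.

Lemma P0 : P 0. Proof. by rewrite /Lambda_perp form_bil bil0l. Qed.
Lemma PD x y : P x -> P y -> P (x + y).
Proof. by rewrite /Lambda_perp !form_bil bilDl => -> ->; rewrite addr0. Qed.
Lemma PN x : P x -> P (- x).
Proof. by rewrite /Lambda_perp !form_bil bilNl => ->; rewrite oppr0. Qed.
Lemma PZ c x : P x -> P (c *: x).
Proof. by rewrite /Lambda_perp !form_bil bilZl => ->; rewrite mulr0. Qed.
Lemma PB x y : P x -> P y -> P (x - y).
Proof. by move=> Px Py; apply: PD => //; apply: PN. Qed.

Definition uu (w : 'cV[int]_23) := N *: w - fm w h *: h.

Lemma P_uu w : P (uu w).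
Proof.
rewrite /Lambda_perp /uu !form_bil bilBl !bilZl -!form_bil.
by rewrite mulrC subrr.
Qed.

Lemma uu_decomp w : N *: w = uu w + fm w h *: h.
Proof. by rewrite /uu subrK. Qed.

Lemma inj_lemma (g1 g2 : 'M[int]_23) : g1 *m h = g2 *m h ->
  (forall v, P v -> g1 *m v = g2 *m v) -> g1 = g2.
Proof.
move=> H1 H2.
have key : forall w : 'cV[int]_23, g1 *m w = g2 *m w.
  move=> w; apply: (@scale_inj _ _ N (g1 *m w) (g2 *m w) N_neq0).
  by rewrite !scalemxAr uu_decomp mulmxDr [g2 *m _]mulmxDr (H2 _ (P_uu w)) -!scalemxAr H1.
apply/matrixP => i j; have := key (delta_mx j 0); rewrite -!colE => /matrixP/(_ i 0).
by rewrite !mxE.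
Qed.

Section Phi.
Variable phi : 'cV[int]_23 -> 'cV[int]_23.
Hypothesis Pcl : forall x, P x -> P (phi x).
Hypothesis Padd : forall x y, P x -> P y -> phi (x + y) = phi x + phi y.

Lemma PMn x k : P x -> P (x *+ k).
Proof. by move=> Px; elim: k => [|k IH]; rewrite ?mulr0n ?mulrS; [apply: P0 | apply: PD]. Qed.

Lemma phi0 : phi 0 = 0.
Proof.
have H := Padd P0 P0; rewrite addr0 in H.
by apply: (@addrI _ (phi 0)); rewrite addr0 -H.
Qed.

Lemma phiN x : P x -> phi (- x) = - phi x.
Proof.
move=> Px; have := Padd Px (PN Px); rewrite subrr phi0.
by move=> H; apply/eqP; rewrite -addr_eq0 addrC -H.
Qed.

Lemma phiMn x k : P x -> phi (x *+ k) = phi x *+ k.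
Proof.
move=> Px; elim: k => [|k IH]; first by rewrite !mulr0n phi0.
by rewrite !mulrS Padd ?IH //; apply: PMn.
Qed.

Lemma phiZ c x : P x -> phi (c *: x) = c *: phi x.
Proof.
move=> Px; rewrite -[c]intz !scaler_int.
case: c => k; first by rewrite phiMn.
by rewrite !NegzE !mulrNz phiN ?phiMn //; apply: PMn.
Qed.

Lemma phi_sum (I : Type) (r : seq I) (F : I -> 'cV[int]_23) :
  (forall i, P (F i)) -> phi (\sum_(i <- r) F i) = \sum_(i <- r) phi (F i).
Proof.
move=> HF; elim: r => [|x r IH]; first by rewrite !big_nil phi0.
have Ps : forall r', P (\sum_(i <- r') F i).
  by elim => [|y r' IH']; rewrite ?big_nil ?big_cons; [apply: P0 | apply: PD].
by rewrite !big_cons Padd // IH.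
Qed.

Definition Pi : 'M[int]_23 := N%:M - h *m (h^T *m Gram n).

Lemma hhB (w : 'cV[int]_23) : h *m (h^T *m Gram n) *m w = fm w h *: h.
Proof.
rewrite -mulmxA [X in h *m X]mx11_scalar mul_mx_scalar.
by rewrite -/(Defs.form n h w) form_sym.
Qed.

Lemma Pi_mul w : Pi *m w = uu w.
Proof. by rewrite /Pi mulmxBl hhB mul_scalar_mx. Qed.

Definition Phim : 'M[int]_23 := \matrix_(i, j) phi (uu (delta_mx j 0)) i 0.

Lemma Phim_mul v : Phim *m v = phi (uu v).
Proof.
have L : Phim *m v = \sum_j v j 0 *: phi (uu (delta_mx j 0)).
  rewrite {1}(cvE v) mulmx_sumr; apply: eq_bigr => j _.
  rewrite -scalemxAr -colE; congr (_ *: _); apply/matrixP => i k.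
  by rewrite !mxE (ord1 k).
have R : phi (uu v) = \sum_j v j 0 *: phi (uu (delta_mx j 0)).
  rewrite -Pi_mul {1}(cvE v) mulmx_sumr phi_sum.
    by apply: eq_bigr => j _; rewrite -scalemxAr phiZ Pi_mul //; apply: P_uu.
  by move=> j; rewrite -scalemxAr Pi_mul; apply: PZ; apply: P_uu.
by rewrite L R.
Qed.

Definition Mint : 'M[int]_23 := Phim + h *m (h^T *m Gram n).

Lemma Mint_mul w : Mint *m w = phi (uu w) + fm w h *: h.
Proof. by rewrite /Mint mulmxDl Phim_mul hhB. Qed.


Hypothesis Pdual : forall (x : 'cV[rat]_23) (m : nat) (y : 'cV[int]_23),
    in_sub_dual n P x -> (0 < m)%N -> P y -> x *+ m = toQ y ->
    exists z : 'cV[int]_23, P z /\ (m%:R)^-1 *: toQ (phi y) - x = toQ z.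

Local Notation NQ := ((Defs.form n h h)%:~R : rat).

Lemma NQ_neq0 : NQ != 0.
Proof. by rewrite intr_eq0 N_neq0. Qed.

Lemma absN : (`|N|%N%:R : rat) = NQ.
Proof. by rewrite natr_absz gtr0_norm. Qed.

Lemma absN_gt0 : (0 < `|N|)%N.
Proof. by rewrite absz_gt0 N_neq0. Qed.

Lemma fm_uu w y : P y -> fm (uu w) y = N * fm w y.
Proof.
move=> Py; rewrite /uu !form_bil bilBl !bilZl -!form_bil (form_sym n h y).
by move: Py; rewrite /Lambda_perp => ->; rewrite mulr0 subr0.
Qed.

Lemma dual_uu w : exists z, P z /\
  NQ^-1 *: toQ (phi (uu w)) - NQ^-1 *: toQ (uu w) = toQ z.
Proof.
have Hx : (NQ^-1 *: toQ (uu w)) *+ `|N| = toQ (uu w).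
  by rewrite -scaler_nat absN scalerA mulfV ?scale1r // NQ_neq0.
have Hd : in_sub_dual n P (NQ^-1 *: toQ (uu w)).
  split; first by exists `|N|%N, (uu w); split; [apply: absN_gt0 | split; [apply: P_uu|]].
  move=> y Py; exists (fm w y).
  rewrite formQ_bil bilZl -formQ_bil formQ_toQ fm_uu // intrM mulrA mulVf ?mul1r //.
  exact: NQ_neq0.
have [z [Pz Hz]] := Pdual Hd absN_gt0 (P_uu w) Hx.
by exists z; split => //; rewrite absN in Hz.
Qed.


Hypothesis Piso : forall x y, P x -> P y -> fm (phi x) (phi y) = fm x y.

Definition gg : 'M[int]_23 := \matrix_(i, j) numq (NQ^-1 * (Mint i j)%:~R).

Lemma toQ_gg : toQ gg = NQ^-1 *: toQ Mint.
Proof.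
apply/matrixP => i j; rewrite !mxE.
have [z [_ Hz]] := dual_uu (delta_mx j 0).
have E : NQ^-1 *: toQ (Mint *m delta_mx j 0) = toQ (z + delta_mx j 0).
  rewrite Mint_mul toQ_add toQ_scale scalerDr.
  move/eqP: Hz; rewrite subr_eq => /eqP ->.
  rewrite /uu toQ_sub !toQ_scale scalerBr !scalerA mulVf ?NQ_neq0 // scale1r toQ_add.
  by rewrite -addrA subrK.
have := congr1 (fun M : 'cV[rat]_23 => M i 0) E; rewrite -colE !mxE => ->.
by rewrite numq_int.
Qed.

Lemma gg_scale : N *: gg = Mint.
Proof.
apply: toQ_inj; rewrite toQ_scale toQ_gg scalerA mulfV ?scale1r //; exact: NQ_neq0.
Qed.

Lemma gg_mul w : N *: (gg *m w) = phi (uu w) + fm w h *: h.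
Proof. by rewrite scalemxAl gg_scale Mint_mul. Qed.

Lemma gg_P v : P v -> gg *m v = phi v.
Proof.
move=> Pv; apply: (@scale_inj _ _ N _ _ N_neq0).
have E : fm v h = 0 by [].
by rewrite gg_mul E scale0r addr0 /uu E scale0r subr0 phiZ.
Qed.

Lemma gg_h : gg *m h = h.
Proof.
apply: (@scale_inj _ _ N _ _ N_neq0).
by rewrite gg_mul /uu subrr phi0 add0r.
Qed.

Lemma gg_iso x y : fm (gg *m x) (gg *m y) = fm x y.
Proof.
apply: (@mulfI _ (N * N)); first by rewrite mulf_neq0 ?N_neq0.
have E : fm (N *: (gg *m x)) (N *: (gg *m y)) = N * N * fm (gg *m x) (gg *m y).
  by rewrite !form_bil bilZl bilZr mulrA.
rewrite -E !gg_mul !form_bil !(bilDl, bilDr, bilZl, bilZr) -!form_bil.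
rewrite Piso; try apply: P_uu.
have Z1 : fm (phi (uu x)) h = 0 by apply: Pcl; apply: P_uu.
have Z2 : fm h (phi (uu y)) = 0.
  by rewrite form_sym; apply: Pcl; apply: P_uu.
rewrite Z1 Z2 /uu !form_bil !(bilBl, bilBr, bilZl, bilZr) -!form_bil.
rewrite (form_sym n h y); ring.
Qed.

Lemma gg_Gram : gg^T *m Gram n *m gg = Gram n.
Proof.
apply: mx_eq_bil => x y.
have -> : bil (gg^T *m Gram n *m gg) x y = fm (gg *m x) (gg *m y).
  by rewrite /bil /Defs.form trmx_mul !mulmxA.
by rewrite gg_iso.
Qed.


Lemma gg_dual x : in_dual n x -> exists z, toQ gg *m x - x = toQ z.
Proof.
move=> Hx.
have [k Hk] := Hx h.
have [m [X [m_gt0 Xm]]] := denom_exists x.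
pose xP := x - (k%:~R / NQ) *: toQ h.
pose mm := (m * `|N|)%N.
have mm_gt0 : (0 < mm)%N by rewrite muln_gt0 m_gt0 absN_gt0.
pose y := N *: X - (m%:Z * k) *: h.
have fmXh : fm X h = m%:Z * k.
  apply: (@intr_inj rat); rewrite -formQ_toQ -Xm -scaler_nat formQ_bil bilZl.
  by rewrite -formQ_bil Hk intrM.
have Py : P y.
  by rewrite /Lambda_perp /y form_bil bilBl !bilZl -!form_bil fmXh mulrC subrr.
have Hy : xP *+ mm = toQ y.
  rewrite -scaler_nat natrM absN /xP /y toQ_sub !toQ_scale -Xm -scaler_nat.
  rewrite scalerBr !scalerA intrM; congr (_ *: _ - _ *: _).
    by rewrite mulrC.
  by field; apply: NQ_neq0.
have Hd : in_sub_dual n P xP.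
  split; first by exists mm, y.
  move=> v Pv; have [j Hj] := Hx v; exists j.
  rewrite /xP formQ_bil bilBl bilZl -!formQ_bil Hj formQ_toQ.
  have -> : fm h v = 0 by rewrite form_sym.
  by rewrite mulr0 subr0.
have [z [Pz Hz]] := Pdual Hd mm_gt0 Py Hy.
exists z; rewrite -Hz -(gg_P Py) toQ_mul -Hy -scaler_nat -scalemxAr scalerA mulVf ?scale1r.
  rewrite /xP mulmxBr -scalemxAr -toQ_mul gg_h.
  by rewrite opprB addrA subrK.
by rewrite pnatr_eq0 -lt0n.
Qed.

End Phi.


Lemma construct phi : tildeO_sub n P phi -> exists g : 'M[int]_23,
  [/\ (forall v, P v -> g *m v = phi v), g *m h = h,
      g^T *m Gram n *m g = Gram n &
      (forall x, in_dual n x -> exists z, toQ g *m x - x = toQ z)].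
Proof.
move=> [[Pcl [_ [Padd Piso]]] Pdual].
exists (gg phi); split.
- by move=> v Pv; apply: gg_P.
- by apply: gg_h.
- by apply: gg_Gram.
- by move=> x Hx; apply: gg_dual.
Qed.

Lemma inv_scale (m : nat) (x : 'cV[rat]_23) : (0 < m)%N -> (m%:R)^-1 *: (x *+ m) = x.
Proof.
move=> hm; rewrite -scaler_nat scalerA mulVf ?scale1r //.
by rewrite pnatr_eq0 -lt0n.
Qed.

Lemma inv_scale2 (m : nat) (x : 'cV[rat]_23) : (0 < m)%N -> ((m%:R)^-1 *: x) *+ m = x.
Proof.
move=> hm; rewrite -scaler_nat scalerA mulfV ?scale1r //.
by rewrite pnatr_eq0 -lt0n.
Qed.

Lemma psi_tilde phi psi : tildeO_sub n P phi ->
  (forall x, P x -> P (psi x)) -> (forall x, P x -> psi (phi x) = x) ->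
  (forall x, P x -> phi (psi x) = x) -> tildeO_sub n P psi.
Proof.
move=> [[Pcl [_ [Padd Piso]]] Pdual] Pcl' psi_phi phi_psi.
have Padd' : forall x y, P x -> P y -> psi (x + y) = psi x + psi y.
  move=> x y Px Py.
  have -> : x + y = phi (psi x) + phi (psi y) by rewrite !phi_psi.
  have Pxy : P (psi x + psi y) by apply: PD; apply: Pcl'.
  by rewrite -Padd ?psi_phi //; apply: Pcl'.
have Piso' : forall x y, P x -> P y -> fm (psi x) (psi y) = fm x y.
  by move=> x y Px Py; rewrite -(Piso (psi x) (psi y)) ?phi_psi //; apply: Pcl'.
split.
  split => //; split; first by exists phi.
  by split.
move=> x m y Hd m_gt0 Py Hxy.
have xE : x = (m%:R)^-1 *: toQ y by rewrite -Hxy inv_scale.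
pose x' := (m%:R)^-1 *: toQ (psi y).
have Hd' : in_sub_dual n P x'.
  split; first by exists m, (psi y); split => //; split; [apply: Pcl' | rewrite inv_scale2].
  move=> v Pv; have [j Hj] := Hd.2 (phi v) (Pcl _ Pv); exists j.
  rewrite -Hj xE /x' !formQ_bil !bilZl -!formQ_bil !formQ_toQ.
  by rewrite -{2}(phi_psi _ Py) (Piso (psi y) v) //; apply: Pcl'.
have [z [Pz Hz]] := Pdual _ _ _ Hd' m_gt0 (Pcl' _ Py) (inv_scale2 (toQ (psi y)) m_gt0).
exists (- z); split; first by apply: PN.
by rewrite toQ_opp -Hz phi_psi // -xE opprB.
Qed.

Section Restrict.
Variables (gam : int) (w0 : 'cV[int]_23).
Hypothesis gam_neq0 : gam != 0.
Hypothesis w0h : fm w0 h = gam.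
Hypothesis hdiv : forall w, (gam %| fm w h)%Z.

Lemma restrict g : tildeO_Lambda_h n h g -> tildeO_sub n P (fun v => g *m v).
Proof.
move=> [[[gU gG] gD] gh].
have giso : forall x y, fm (g *m x) (g *m y) = fm x y.
  by move=> x y; rewrite form_bil bil_iso.
have gGQ : (toQ g)^T *m toQ (Gram n) *m toQ g = toQ (Gram n).
  by rewrite -toQ_tr -!toQ_mul gG.
have gisoQ : forall x y, fQ (toQ g *m x) (toQ g *m y) = fQ x y.
  by move=> x y; rewrite formQ_bil bil_iso.
have Pcl : forall x, P x -> P (g *m x).
  by move=> x Px; rewrite /Lambda_perp -{1}gh giso.
split.
  split => //; split.
    exists (fun v => invmx g *m v); split.
      move=> x Px; rewrite /Lambda_perp -(giso (invmx g *m x) h) mulKVmx // gh.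
      exact: Px.
    by split => x Px; rewrite ?mulKmx ?mulKVmx.
  split; first by move=> x y _ _; rewrite mulmxDr.
  by move=> x y _ _; apply: giso.
move=> x m y Hd m_gt0 Py Hxy.
have xE : x = (m%:R)^-1 *: toQ y by rewrite -Hxy inv_scale.
have xh : fQ x (toQ h) = 0.
  by rewrite xE formQ_bil bilZl -formQ_bil formQ_toQ Py mulr0.
pose c := fQ x (toQ w0) / gam%:~R.
pose x' := x - c *: toQ h.
have Hx' : in_dual n x'.
  move=> w; have /dvdzP [q Hq] := hdiv w.
  have Pw' : P (w - q *: w0).
    by rewrite /Lambda_perp form_bil bilBl bilZl -!form_bil w0h Hq subrr.
  have [j Hj] := Hd.2 _ Pw'; exists j.
  move: Hj; rewrite toQ_sub toQ_scale formQ_bil bilBr bilZr -!formQ_bil => Hj.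
  rewrite /x' formQ_bil bilBl bilZl -formQ_bil formQ_toQ (form_sym n h w) Hq.
  rewrite -Hj /c intrM; field.
  by rewrite intr_eq0.
have [z Hz] := gD x' Hx'.
have Ez : toQ g *m x - x = toQ z.
  rewrite -Hz /x' mulmxBr -scalemxAr -toQ_mul gh.
  by rewrite opprB addrA subrK.
exists z; split.
  apply: (@intr_inj rat); rewrite -formQ_toQ -Ez formQ_bil bilBl -formQ_bil.
  by rewrite -{1}gh toQ_mul gisoQ xh subrr.
rewrite -Ez toQ_mul -Hxy -scaler_nat -scalemxAr scalerA mulVf ?scale1r //.
by rewrite pnatr_eq0 -lt0n.
Qed.
End Restrict.

End Main.

Lemma cd_hvec gamma a t :
  [/\ cd (hvec gamma a t) 0 = gamma%:Z, cd (hvec gamma a t) 1 = gamma%:Z * t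
    & cd (hvec gamma a t) 22 = - a].
Proof.
rewrite /cd /hvec /e_ /f_ /l_; split; rewrite !mxE !inordK //=; ring.
Qed.

Lemma cd_f : [/\ cd f_ 0 = 0, cd f_ 1 = 1 & cd f_ 22 = 0].
Proof. by rewrite /cd /f_; split; rewrite !mxE !inordK. Qed.

Theorem proposition3p6 (n gamma : nat) (a t : int) :
  (2 <= n)%N -> (0 < gamma)%N -> (gamma %| 2 * n.-1)%N ->
  coprimez a gamma%:Z ->
  0 < gamma%:Z ^+ 2 * t - n.-1%:Z * a ^+ 2 ->
  let h := hvec gamma a t in
  (* restriction maps tilde O(Lambda,h) into tilde O(Lambda_h) *)
  (forall g : 'M[int]_23, tildeO_Lambda_h n h g ->
     tildeO_sub n (Lambda_perp n h) (fun v => g *m v)) /\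
  (* it is injective *)
  (forall g1 g2 : 'M[int]_23, tildeO_Lambda_h n h g1 -> tildeO_Lambda_h n h g2 ->
     (forall v, Lambda_perp n h v -> g1 *m v = g2 *m v) -> g1 = g2) /\
  (* and surjective *)
  (forall phi : 'cV[int]_23 -> 'cV[int]_23, tildeO_sub n (Lambda_perp n h) phi ->
     exists g : 'M[int]_23, tildeO_Lambda_h n h g /\
       forall v, Lambda_perp n h v -> phi v = g *m v).
Proof.
move=> hn hg hdvd hcop hd h.
have [h0 h1 h22] := cd_hvec gamma a t.
have Npos : 0 < Defs.form n h h.
  rewrite /h form_h -/h h0 h1 h22.
  have -> : gamma%:Z * (gamma%:Z * t + t * gamma%:Z) - a * - (2 * n.-1)%N%:Z * - a
      = 2 * (gamma%:Z ^+ 2 * t - n.-1%:Z * a ^+ 2).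
    by rewrite PoszM; ring.
  by rewrite mulr_gt0.
have gam_neq0 : gamma%:Z != 0 by rewrite eqz_nat -lt0n.
have [f0 f1 f22] := cd_f.
have w0h : Defs.form n f_ h = gamma%:Z.
  by rewrite /h form_h f0 f1 f22; ring.
have hdiv : forall w, (gamma%:Z %| Defs.form n w h)%Z.
  move=> w; rewrite /h form_h.
  have /dvdnP [q Hq] := hdvd.
  apply/dvdzP; exists (cd w 1 + t * cd w 0 + a * q%:Z * cd w 22).
  rewrite Hq PoszM; ring.
split; first by move=> g Hg; apply: (restrict gam_neq0 w0h hdiv).
split.
  move=> g1 g2 [_ H1] [_ H2] H; apply: (inj_lemma Npos) => //.
  by rewrite H1 H2.
move=> phi Hphi.
have [g [gP gh gG gD]] := construct Npos Hphi.
have [_ [[psi [Pcl' [psi_phi phi_psi]]] _]] := Hphi.1.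
have Hpsi := psi_tilde Hphi Pcl' psi_phi phi_psi.
have [g' [g'P g'h _ _]] := construct Npos Hpsi.
have Hone : g' *m g = 1%:M.
  apply: (inj_lemma Npos).
    by rewrite -mulmxA gh g'h mul1mx.
  move=> v Pv; rewrite -mulmxA gP // g'P ?psi_phi ?mul1mx //.
  by apply: Hphi.1.1.
have [_ gU] := mulmx1_unit Hone.
exists g; split; first by split => //; split.
by move=> v Pv; rewrite gP.
Qed.
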